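(* Fix an integer $b\geq 3$. For a positive integer $c$ and $d\in\{1,2\}$ set \[ I_{d,1}(c)=\bigcup_{j\in\mathbb{Z}}\left[\frac{b^{-j}}{db^c-2},\frac{2b^{-j}}{db^c-1}\right]\cap[0,1]. \] Then there exists $c_0$ such that for all integers $c\geq c_0$, \[ 2\mu_{ST}(I_{2,1}(c))-2\mu_{ST}(I_{1,1}(c))>\frac{1}{40}. \]
   Context: $\mu_{ST}$ denotes the Sato–Tate measure on $[-1,1]$, $d\mu_{ST}=\frac{2}{\pi}\sqrt{1-t^2}\,dt$. *)

(* Defs.v *)
From HB Require Import structures.
From mathcomp Require Import all_boot all_order all_algebra.
From mathcomp Require Import all_classical all_reals all_analysis.
Set Implicit Arguments. Unset Strict Implicit. Unset Printing Implicit Defensive.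
Import Order.TTheory GRing.Theory Num.Theory.
Import numFieldNormedType.Exports.
Local Open Scope classical_set_scope.
Local Open Scope ring_scope.

Definition mu_ST (R : realType) (A : set R) : \bar R :=
  let D := A `&` `[(-1 : R), 1]%classic in
  (\int[@lebesgue_measure R]_(t in D)
      ((2 / pi) * Num.sqrt (1 - t ^+ 2))%:E)%E.

Definition I_d1 (R : realType) (b d c : nat) : set R :=
  [set x : R | (0 <= x <= 1) /\
     exists j : int,
       ((b%:R : R) ^ (- j) / (d%:R * (b%:R : R) ^+ c - 2) <= x) /\
       (x <= 2 * (b%:R : R) ^ (- j) / (d%:R * (b%:R : R) ^+ c - 1))].

(* Main.v *)
Require Import Defs.
From HB Require Import structures.
From mathcomp Require Import all_boot all_order all_algebra.
From mathcomp Require Import all_classical all_reals all_analysis.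
From mathcomp Require Import measurable_realfun.
From mathcomp Require Import ring lra zify.
Import Order.TTheory GRing.Theory Num.Theory.
Import numFieldNormedType.Exports.
Local Open Scope ring_scope.

Module Aux.
Set Implicit Arguments. Unset Strict Implicit. Unset Printing Implicit Defensive.
Local Open Scope classical_set_scope.
Local Open Scope ring_scope.


Definition sf (R : realType) (t : R) : R := (2 / pi) * Num.sqrt (1 - t ^+ 2).
Definition FI (R : realType) (A : set R) : \bar R :=
  (\int[@lebesgue_measure R]_(t in A) (sf t)%:E)%E.

Lemma sf_ge0 (R : realType) (t : R) : 0 <= sf t.
Proof. by rewrite /sf mulr_ge0 ?sqrtr_ge0 // divr_ge0 // pi_ge0. Qed.

Lemma sf_mfun (R : realType) (D : set R) : measurable_fun D (EFin \o @sf R).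
Proof.
apply/measurable_EFinP.
apply: (measurable_funS (E := setT)) => //.
have h : @sf R = ((fun=> 2/pi) \* (Num.sqrt \o ((fun=> 1) - (fun t : R => t ^+ 2)))).
  by apply: funext => t.
rewrite h; apply: continuous_measurable_fun => x.
apply: continuousM; first exact: cst_continuous.
apply: continuous_comp; last exact: sqrt_continuous.
apply: continuousB; first exact: cst_continuous.
exact: exprn_continuous.
Qed.

Lemma FI_ge0 (R : realType) (A : set R) : (0 <= FI A)%E.
Proof. by apply: integral_ge0 => x _; rewrite lee_fin sf_ge0. Qed.

Lemma FI_cst (R : realType) (u v c : R) : u <= v ->
  (\int[@lebesgue_measure R]_(t in `[u, v[) c%:E = (c * (v - u))%:E)%E.
Proof.
move=> uv.
have := @integral_cst _ _ _ (@lebesgue_measure R) `[u, v[ (measurable_itv _) c%:E.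
move=> /= ->; rewrite lebesgue_measure_itv /=.
case: ltP => [_|]; first by rewrite -EFinD.
rewrite lee_fin => vu.
have -> : v = u by apply/eqP; rewrite eq_le uv vu.
by rewrite subrr mulr0 mule0.
Qed.

Lemma sqrt_lowb (R : realType) (r t : R) : 0 <= r -> r ^+ 2 <= 1 - t ^+ 2 ->
  r <= Num.sqrt (1 - t ^+ 2).
Proof.
move=> r0 h; have := ler_wsqrtr h.
by rewrite sqrtr_sqr ger0_norm.
Qed.

Lemma sqrt_upb (R : realType) (M t : R) : 0 <= M -> 1 - t ^+ 2 <= M ^+ 2 ->
  Num.sqrt (1 - t ^+ 2) <= M.
Proof.
move=> M0 h; have := ler_wsqrtr h.
by rewrite sqrtr_sqr ger0_norm.
Qed.

Lemma pi_pos (R : realType) : 0 < (2 / pi : R).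
Proof. by rewrite divr_gt0 // pi_gt0. Qed.

Lemma FI_low (R : realType) (A : set R) (u v r : R) : measurable A -> u <= v ->
  (r = 0 \/ ([set` Interval (BLeft u) (BLeft v)] `<=` A /\ 0 <= u /\ 0 <= r /\ r ^+ 2 + v ^+ 2 <= 1)) ->
  (((2 / pi) * r * (v - u))%:E <= FI (A `&` `[u, v[))%E.
Proof.
move=> mA uv [->|[sub [u0 [r0 hr]]]].
  by rewrite mulr0 mul0r FI_ge0.
rewrite setIidr // /FI -FI_cst //.
apply: ge0_le_integral => //.
- by move=> x _; rewrite lee_fin mulr_ge0 // ltW // pi_pos.
- exact: sf_mfun.
move=> x; rewrite /= in_itv /= => /andP[ux xv].
rewrite lee_fin /sf ler_pM2l ?pi_pos //.
apply: sqrt_lowb => //.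
have x0 : 0 <= x by apply: le_trans ux.
have : x ^+ 2 <= v ^+ 2 by rewrite lerXn2r // ?ltW // nnegrE (le_trans x0) // ltW.
lra.
Qed.

Lemma FI_up (R : realType) (A : set R) (u v M : R) : measurable A -> u <= v ->
  ((M = 0 /\ A `&` `[u, v[ = set0) \/ (0 <= u /\ 0 <= M /\ 1 - u ^+ 2 <= M ^+ 2)) ->
  (FI (A `&` `[u, v[) <= ((2 / pi) * M * (v - u))%:E)%E.
Proof.
move=> mA uv [[-> ->]|[u0 [M0 hM]]].
  by rewrite /FI integral_set0 mulr0 mul0r.
apply: (@le_trans _ _ (FI `[u, v[)).
  apply: ge0_subset_integral => //; (try exact: measurableI); (try exact: sf_mfun);
   (try by move=> x _; rewrite lee_fin sf_ge0); exact: subIsetr.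
rewrite /FI -FI_cst //.
apply: ge0_le_integral => //.
- by move=> x _; rewrite lee_fin sf_ge0.
- exact: sf_mfun.
move=> x; rewrite /= in_itv /= => /andP[ux xv].
rewrite lee_fin /sf ler_pM2l ?pi_pos //.
apply: sqrt_upb => //.
have x0 : 0 <= x by apply: le_trans ux.
have : u ^+ 2 <= x ^+ 2 by rewrite lerXn2r.
lra.
Qed.

Lemma split_itv (R : realType) (A : set R) (u v w : R) : u <= v -> v <= w ->
  A `&` `[u, w[ = (A `&` `[u, v[) `|` (A `&` `[v, w[).
Proof.
move=> uv vw; rewrite -setIUr (@itv_bndbnd_setU _ _ _ (BLeft v)) //.
Qed.

Lemma disj_itv (R : realType) (A : set R) (u v w : R) :
  [disjoint (A `&` `[u, v[) & (A `&` `[v, w[)].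
Proof.
rewrite /disj_set; apply/eqP/seteqP; split => x //=.
rewrite !in_itv /= => -[[_ /andP[_ xv]] [_ /andP[vx _]]].
by move: (lt_le_trans xv vx); rewrite ltxx.
Qed.

Fixpoint lsum (R : realType) (u : R) (l : seq (R * R * bool)) : R :=
  if l is (v, r, g) :: l' then (if g then 0 else r * (v - u)) + lsum v l' else 0.
Fixpoint llast (R : realType) (u : R) (l : seq (R * R * bool)) : R :=
  if l is (v, r, g) :: l' then llast v l' else u.
Fixpoint okL (R : realType) (A : set R) (u : R) (l : seq (R * R * bool)) : Prop :=
  if l is (v, r, g) :: l' then
    (u <= v /\ (if g then True else
      (`[u, v[ `<=` A /\ 0 <= u /\ 0 <= r /\ r ^+ 2 + v ^+ 2 <= 1)))
    /\ okL A v l'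
  else True.
Fixpoint okU (R : realType) (A : set R) (u : R) (l : seq (R * R * bool)) : Prop :=
  if l is (v, M, g) :: l' then
    (u <= v /\ (if g then A `&` `[u, v[ = set0 else
       (0 <= u /\ 0 <= M /\ 1 - u ^+ 2 <= M ^+ 2)))
    /\ okU A v l'
  else True.

Lemma okL_last (R : realType) (A : set R) u l : okL A u l -> u <= llast u l.
Proof.
elim: l u => [|[[v r] g] l IH] u //= [[uv _] h].
exact: le_trans uv (IH _ h).
Qed.

Lemma okU_last (R : realType) (A : set R) u l : okU A u l -> u <= llast u l.
Proof.
elim: l u => [|[[v r] g] l IH] u //= [[uv _] h].
exact: le_trans uv (IH _ h).
Qed.

Lemma FI_split (R : realType) (A : set R) (u v w : R) : measurable A -> u <= v -> v <= w ->
  FI (A `&` `[u, w[) = (FI (A `&` `[u, v[) + FI (A `&` `[v, w[))%E.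
Proof.
move=> mA uv vw; rewrite /FI (split_itv A uv vw) ge0_integral_setU //.
- exact: measurableI.
- exact: measurableI.
- exact: sf_mfun.
- by move=> x _; rewrite lee_fin sf_ge0.
- exact: disj_itv.
Qed.

Lemma lowL (R : realType) (A : set R) u l : measurable A -> okL A u l ->
  (((2 / pi) * lsum u l)%:E <= FI (A `&` `[u, llast u l[))%E.
Proof.
move=> mA; elim: l u => [|[[v r] g] l IH] u /=.
  by move=> _; rewrite mulr0 FI_ge0.
move=> [[uv hr] h].
rewrite (FI_split mA uv (okL_last h)) mulrDr EFinD.
apply: leeD; last exact: IH.
case: g hr => hr; first by rewrite mulr0 FI_ge0.
by rewrite mulrA; apply: FI_low => //; right.
Qed.

Lemma upL (R : realType) (A : set R) u l : measurable A -> okU A u l ->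
  (FI (A `&` `[u, llast u l[) <= ((2 / pi) * lsum u l)%:E)%E.
Proof.
move=> mA; elim: l u => [|[[v r] g] l IH] u /=.
  by move=> _; rewrite mulr0 set_itvxx setI0 /FI integral_set0.
move=> [[uv hr] h].
rewrite (FI_split mA uv (okU_last h)) mulrDr EFinD.
apply: leeD; last exact: IH.
case: g hr => hr; first by rewrite mulr0 hr /FI integral_set0.
by rewrite mulrA; apply: FI_up => //; right.
Qed.


Lemma powE (R : realType) (b c : nat) (k : int) : (0 < b)%N ->
  (b%:R : R) ^ (- (k - c%:Z)) = (b%:R : R) ^+ c * (b%:R : R) ^ (- k).
Proof.
move=> b0.
have -> : - (k - c%:Z) = c%:Z + (- k) by rewrite opprB addrC.
rewrite expfzDr //; rewrite pnatr_eq0; lia.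
Qed.

Lemma pownat (R : realType) (b n : nat) :
  (b%:R : R) ^ (- (n%:Z)) = ((b%:R : R)^-1) ^+ n.
Proof. by rewrite exprVn exprnN. Qed.

Lemma I2sub (R : realType) (b c k : nat) (p q : R) : (3 <= b)%N ->
  1000 <= (b%:R : R) ^+ c ->
  501 / 1000 * ((b%:R : R)^-1) ^+ k <= p -> q <= ((b%:R : R)^-1) ^+ k ->
  `[p, q[ `<=` @I_d1 R b 2 c.
Proof.
move=> hb hB hp hq x; rewrite /= in_itv /= => /andP[px xq].
have b1 : (1 <= b)%N by apply: leq_trans hb.
have bpos : 0 < (b%:R : R) by rewrite ltr0n.
have y1 : (b%:R : R)^-1 <= 1 by rewrite invf_le1 // ler1n.
have Y0 : 0 <= ((b%:R : R)^-1) ^+ k by rewrite exprn_ge0 // invr_ge0 ltW.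
have Y1 : ((b%:R : R)^-1) ^+ k <= 1 by rewrite exprn_ile1 // invr_ge0 ltW.
split.
  apply/andP; split.
    apply: (le_trans _ px); apply: (le_trans _ hp); apply: mulr_ge0 Y0; apply: divr_ge0; exact: ler0n.
  exact: (ltW (lt_le_trans xq (le_trans hq Y1))).
exists (k%:Z - c%:Z).
rewrite powE; last by apply: leq_trans hb.
rewrite pownat.
move: hp hq Y0 Y1 hB px xq.
move: (((b%:R : R)^-1) ^+ k) => Y.
move: ((b%:R : R) ^+ c) => B.
clear.
move=> hp hq Y0 Y1 hB px xq.
have h2 : 0 < 2%:R * B - 2 by lra.
have h1 : 0 < 2%:R * B - 1 by lra.
split.
  rewrite ler_pdivrMr //.
  have : 0 <= (x - 501/1000 * Y) * (2%:R * B - 2) by apply: mulr_ge0; lra.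
  have : 0 <= Y * (B - 501) by apply: mulr_ge0; lra.
  lra.
rewrite ler_pdivlMr //.
have : 0 <= (Y - x) * (2%:R * B - 1) by apply: mulr_ge0; lra.
have : 0 <= Y * B by apply: mulr_ge0; lra.
lra.
Qed.

Lemma I1mem (R : realType) (b c : nat) (x : R) : (3 <= b)%N ->
  1000 <= (b%:R : R) ^+ c -> @I_d1 R b 1 c x ->
  exists n : nat, (1 <= n)%N /\ ((b%:R : R)^-1) ^+ n <= x /\
     x < 201 / 100 * ((b%:R : R)^-1) ^+ n.
Proof.
move=> hb hB [/andP[x0 x1] [j [h1 h2]]].
have b0 : (0 < b)%N by apply: leq_trans hb.
have bpos : 0 < (b%:R : R) by rewrite ltr0n.
move: h1 h2; rewrite -[j](addrK (c%:Z)) powE //.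
have hBR : (1%:R : R) * (b%:R : R) ^+ c = (b%:R : R) ^+ c by rewrite mul1r.
rewrite hBR.
case: (j + c%:Z) => [n|m].
- rewrite pownat.
  have y0 : 0 < ((b%:R : R)^-1) ^+ n by rewrite exprn_gt0 // invr_gt0.
  case: n y0 => [|n] y0.
    rewrite expr0 mulr1 => h1 _; exfalso.
    move: h1 x1 hB; move: ((b%:R : R) ^+ c) => B; clear => h1 x1 hB.
    have h2 : 0 < B - 2 by lra.
    have : 0 <= (1 - x) * (B - 2) by apply: mulr_ge0; lra.
    move: h1; rewrite ler_pdivrMr //; lra.
  exists n.+1; split => //.
  move: h1 h2 y0 hB x0 x1; move: (((b%:R : R)^-1) ^+ n.+1) => z.
  move: ((b%:R : R) ^+ c) => B; clear => h1 h2 z0 hB x0 x1.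
  have hB2 : 0 < B - 2 by lra.
  have hB1 : 0 < B - 1 by lra.
  move: h1 h2; rewrite ler_pdivrMr // ler_pdivlMr // => h1 h2.
  split.
    have : 0 <= (x - z) * B by lra.
    by rewrite pmulr_lge0 ?subr_ge0 //; lra.
  rewrite ltNge; apply/negP => H.
  have : 0 <= (x - 201/100 * z) * (B - 1) by apply: mulr_ge0; lra.
  have : 0 < z * (B - 201) by apply: mulr_gt0; lra.
  lra.
- have -> : (- Negz m) = (m.+1)%:Z by rewrite NegzE opprK.
  have z1 : 1 <= (b%:R : R) ^ (m.+1)%:Z.
    by apply: exprn_ege1; rewrite ler1n.
  move=> h1 _; exfalso.
  move: h1 z1 x1 hB; move: ((b%:R : R) ^ (m.+1)%:Z) => z.
  move: ((b%:R : R) ^+ c) => B; clear => h1 z1 x1 hB.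
  have h2 : 0 < B - 2 by lra.
  move: h1; rewrite ler_pdivrMr // => h1.
  have : 0 <= B * (z - 1) by apply: mulr_ge0; lra.
  have : 0 <= (1 - x) * (B - 2) by apply: mulr_ge0; lra.
  lra.
Qed.

Lemma ypow_le (R : realType) (b m n : nat) : (3 <= b)%N -> (m <= n)%N ->
  ((b%:R : R)^-1) ^+ n <= ((b%:R : R)^-1) ^+ m.
Proof.
move=> hb mn.
have bpos : 0 < (b%:R : R) by rewrite ltr0n; apply: leq_trans hb.
have h0 : 0 <= (b%:R : R)^-1 by rewrite invr_ge0 ltW.
have h1 : (b%:R : R)^-1 <= 1 by rewrite invf_le1 // ler1n; apply: leq_trans hb.
exact: (ler_wiXn2l h0 h1 mn).
Qed.

Lemma I1gap (R : realType) (b c m : nat) (p q : R) : (3 <= b)%N ->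
  1000 <= (b%:R : R) ^+ c ->
  201 / 100 * ((b%:R : R)^-1) ^+ m.+1 <= p -> q <= ((b%:R : R)^-1) ^+ m ->
  @I_d1 R b 1 c `&` `[p, q[ = set0.
Proof.
move=> hb hB hp hq; apply/seteqP; split => x //= [hx].
rewrite in_itv /= => /andP[px xq].
have [n [n1 [h1 h2]]] := I1mem hb hB hx.
case: (leqP n m) => hnm.
  have := ypow_le R hb hnm; move: h1 xq hq.
  move: (((b%:R : R)^-1) ^+ n) (((b%:R : R)^-1) ^+ m) => Yn Ym; clear; lra.
have := ypow_le R hb hnm; move: h2 px hp.
move: (((b%:R : R)^-1) ^+ n) (((b%:R : R)^-1) ^+ m.+1) => Yn Ym; clear; lra.
Qed.

Lemma I1sub (R : realType) (b c : nat) : (3 <= b)%N ->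
  1000 <= (b%:R : R) ^+ c ->
  @I_d1 R b 1 c `<=` `[0, 201 / 100 * (b%:R : R)^-1[.
Proof.
move=> hb hB x hx; have [n [n1 [h1 h2]]] := I1mem hb hB hx.
case: hx => /andP[x0 _] _.
rewrite /= in_itv /= x0 /=.
have := ypow_le R hb n1; rewrite expr1; move: h2.
move: (((b%:R : R)^-1) ^+ n) ((b%:R : R)^-1) => Yn Y; clear; lra.
Qed.

Lemma I_meas (R : realType) (b d c : nat) : measurable (@I_d1 R b d c).
Proof.
set lo := fun j : int => (b%:R : R) ^ (- j) / (d%:R * (b%:R : R) ^+ c - 2).
set hi := fun j : int => 2 * (b%:R : R) ^ (- j) / (d%:R * (b%:R : R) ^+ c - 1).
have -> : @I_d1 R b d c = `[0, 1] `&`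
   \bigcup_(n in [set: nat]) (`[lo n%:Z, hi n%:Z] `|` `[lo (- n%:Z), hi (- n%:Z)]).
  apply/seteqP; split => x.
    move=> [h01 [j [h1 h2]]]; split; first by rewrite /= in_itv /=.
    case: j h1 h2 => [n|n] h1 h2.
      by exists n => //; left; rewrite /= in_itv /= h1 h2.
    exists n.+1 => //; right; rewrite /= in_itv /= -NegzE.
    by rewrite /lo /hi h1 h2.
  rewrite /= in_itv /= => -[h01 [n _ [|]]]; rewrite /= in_itv /= => /andP[h1 h2].
    by split => //; exists n%:Z.
  by split => //; exists (- n%:Z).
apply: measurableI; first exact: measurable_itv.
apply: bigcupT_measurable => n.
by apply: measurableU; exact: measurable_itv.
Qed.


Lemma pi_lt4 (R : realType) : (pi : R) < 4.
Proof. have := @pihalf_lt2 R; rewrite ltr_pdivrMr //; lra. Qed.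

Lemma fin_arith (R : realType) (m1 m2 : \bar R) (P Q : R) :
  (((2 / pi) * P)%:E <= m2)%E -> (0 <= m1)%E -> (m1 <= ((2 / pi) * Q)%:E)%E ->
  1 / 40 <= P - Q -> ((1 / 40 : R)%:E < 2%:E * m2 - 2%:E * m1)%E.
Proof.
move=> h2 h0 h1 hPQ.
have k0 : 1 / 2 < (2 / pi : R).
  have := pi_lt4 R; have := @pi_gt0 R; move: (pi : R) => p; clear => p0 p4.
  rewrite ltr_pdivlMr //; lra.
move: (2 / pi : R) k0 h2 h1 => k k0 h2 h1.
case: m1 h0 h1 => [r1| |] //; rewrite ?lee_fin => h0 h1.
case: m2 h2 => [r2| |] //.
  rewrite lee_fin => h2; rewrite -!EFinM -EFinB lte_fin.
  have : 0 <= k * (P - Q - 1/40) by apply: mulr_ge0; lra.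
  lra.
move=> _; rewrite mulry gtr0_sg // mul1e -EFinM addye //.
exact: ltry.
Qed.


Lemma muE (R : realType) (A : set R) : mu_ST A = FI (A `&` `[-1, 1]).
Proof. by []. Qed.

Lemma assemble (R : realType) (b c : nat) (L U : seq (R * R * bool)) (u0 : R) :
  (3 <= b)%N -> 1000 <= (b%:R : R) ^+ c ->
  0 <= u0 -> okL (@I_d1 R b 2 c) u0 L -> llast u0 L = 1 ->
  okU (@I_d1 R b 1 c) 0 U -> llast 0 U = 201 / 100 * (b%:R : R)^-1 ->
  1 / 40 <= lsum u0 L - lsum 0 U ->
  ((2%:E * mu_ST (@I_d1 R b 2 c) - 2%:E * mu_ST (@I_d1 R b 1 c))
       > (1 / 40 : R)%:E)%E.
Proof.
move=> hb hB u00 oL lL oU lU hs.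
apply: (fin_arith _ _ _ hs).
- rewrite muE; apply: (le_trans (lowL (@I_meas R b 2 c) oL)).
  rewrite lL /FI; apply: ge0_subset_integral => //.
  + by apply: measurableI; [exact: (@I_meas R) | exact: measurable_itv].
  + by apply: measurableI; [exact: (@I_meas R) | exact: measurable_itv].
  + exact: sf_mfun.
  + by move=> x _; rewrite lee_fin sf_ge0.
  + move=> x [hx]; rewrite /= !in_itv /= => /andP[h1 h2]; split => //.
    apply/andP; split; last exact: ltW.
    by apply: le_trans h1; apply: le_trans u00.
- exact: FI_ge0.
- rewrite muE.
  have -> : @I_d1 R b 1 c `&` `[-1, 1] = @I_d1 R b 1 c `&` `[0, llast 0 U[.
    rewrite lU; apply/seteqP; split => x [hx _]; split => //.
      exact: (I1sub hb hB hx).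
    case: hx => /andP[h1 h2] _; rewrite /= in_itv /= h2 andbT.
    by apply: le_trans h1.
  exact: upL (@I_meas R b 1 c) oU.
Qed.


Definition L4 (R : realType) (y : R) : seq (R * R * bool) :=
  [:: (y ^+ 2, 99/100, false); (501/1000 * y, 0, true); (y, 968/1000, false);
      (501/1000, 0, true); (6/10, 8/10, false); (7/10, 71/100, false);
      (8/10, 6/10, false); (9/10, 435/1000, false); (1, 0, false)].
Definition U4 (R : realType) (y : R) : seq (R * R * bool) :=
  [:: (201/100 * y ^+ 3, 1, false); (y ^+ 2, 0, true); (201/100 * y ^+ 2, 1, false);
      (y, 0, true); (201/100 * y, 1, false)].

Lemma num4 (R : realType) (y : R) (A2 A1 : set R) : 0 < y -> y <= 1/4 ->
  (forall (k : nat) p q, 501/1000 * y ^+ k <= p -> q <= y ^+ k -> `[p, q[ `<=` A2) ->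
  (forall (m : nat) p q, 201/100 * y ^+ m.+1 <= p -> q <= y ^+ m -> A1 `&` `[p, q[ = set0) ->
  [/\ okL A2 (501/1000 * y ^+ 2) (L4 y), llast (501/1000 * y ^+ 2) (L4 y) = 1,
      okU A1 0 (U4 y), llast 0 (U4 y) = 201/100 * y &
      1/40 <= lsum (501/1000 * y ^+ 2) (L4 y) - lsum 0 (U4 y)].
Proof.
move=> y0 y4 HA HG.
have Y2 : y ^+ 2 <= 1/16 by nra.
have Y20 : 0 <= y ^+ 2 by rewrite exprn_ge0 // ltW.
have Y2y : y ^+ 2 <= y / 4 by rewrite expr2; nra.
have Y3 : y ^+ 3 <= y ^+ 2 / 4 by rewrite exprS; nra.
have Y30 : 0 <= y ^+ 3 by rewrite exprn_ge0 // ltW.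
have Y22 : (y ^+ 2) ^+ 2 <= 1/256 by nra.
have Y220 : 0 <= (y ^+ 2) ^+ 2 by rewrite exprn_ge0.
split.
- rewrite /L4; cbn [okL]; repeat match goal with |- _ /\ _ => split end.
  all: try exact I.
  Time idtac.
  all: try (match goal with |- `[_, _[ `<=` _ => idtac end;
       first [ apply: (HA 2); lra | apply: (HA 1); rewrite ?expr1; lra
             | apply: (HA 0); rewrite ?expr0; lra ]).
  all: try lra.
- reflexivity.
- rewrite /U4; cbn [okU]; repeat match goal with |- _ /\ _ => split end.
  all: try exact I.
  Time idtac.
  all: try (match goal with |- _ `&` _ = set0 => idtac end;
       first [ apply: (HG 2); lra | apply: (HG 1); rewrite ?expr1; lra ]).
  all: try lra.
- reflexivity.
- rewrite /L4 /U4; cbn [lsum]; lra.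
Qed.

Definition L3 (R : realType) (y : R) : seq (R * R * bool) :=
  [:: (y ^+ 3, 999/1000, false); (501/1000 * y ^+ 2, 0, true);
      (y ^+ 2, 993/1000, false); (501/1000 * y, 0, true);
      (y, 471/500, false); (501/1000, 0, true);
      (3/5, 4/5, false); (7/10, 357/500, false); (3/4, 661/1000, false);
      (4/5, 599/1000, false); (17/20, 263/500, false); (9/10, 87/200, false);
      (93/100, 367/1000, false); (24/25, 7/25, false); (49/50, 99/500, false);
      (1, 0, false)].
Definition U3 (R : realType) (y : R) : seq (R * R * bool) :=
  [:: (201/100 * y ^+ 4, 1, false); (y ^+ 3, 0, true); (201/100 * y ^+ 3, 1, false);
      (y ^+ 2, 0, true); (201/100 * y ^+ 2, 497/500, false); (y, 0, true);
      (2/5, 943/1000, false); (9/20, 917/1000, false); (1/2, 447/500, false);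
      (11/20, 867/1000, false); (3/5, 209/250, false); (201/100 * y, 4/5, false)].

Lemma num3 (R : realType) (y : R) (A2 A1 : set R) : y = 1/3 ->
  (forall (k : nat) p q, 501/1000 * y ^+ k <= p -> q <= y ^+ k -> `[p, q[ `<=` A2) ->
  (forall (m : nat) p q, 201/100 * y ^+ m.+1 <= p -> q <= y ^+ m -> A1 `&` `[p, q[ = set0) ->
  [/\ okL A2 (501/1000 * y ^+ 3) (L3 y), llast (501/1000 * y ^+ 3) (L3 y) = 1,
      okU A1 0 (U3 y), llast 0 (U3 y) = 201/100 * y &
      1/40 <= lsum (501/1000 * y ^+ 3) (L3 y) - lsum 0 (U3 y)].
Proof.
move=> hy HA HG; subst y.
split.
- rewrite /L3; cbn [okL]; repeat match goal with |- _ /\ _ => split end.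
  all: try exact I.
  all: try (match goal with |- `[_, _[ `<=` _ => idtac end;
       first [ apply: (HA 3); lra | apply: (HA 2); lra
             | apply: (HA 1); rewrite ?expr1; lra
             | apply: (HA 0); rewrite ?expr0; lra ]).
  all: try lra.
- reflexivity.
- rewrite /U3; cbn [okU]; repeat match goal with |- _ /\ _ => split end.
  all: try exact I.
  all: try (match goal with |- _ `&` _ = set0 => idtac end;
       first [ apply: (HG 3); lra | apply: (HG 2); lra
             | apply: (HG 1); rewrite ?expr1; lra ]).
  all: try lra.
- reflexivity.
- rewrite /L3 /U3; cbn [lsum]; lra.
Qed.

End Aux.
Import Aux.

Theorem lemma3p1 (R : realType) (b : nat) (hb : (3 <= b)%N) :
  exists c0 : nat, forall c : nat, (c0 <= c)%N -> (0 < c)%N ->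
    ((2%:E * mu_ST (@I_d1 R b 2 c) - 2%:E * mu_ST (@I_d1 R b 1 c))
       > (1 / 40 : R)%:E)%E.
Proof.
exists 1000%N => c hc _.
have hB : 1000 <= (b%:R : R) ^+ c.
  rewrite -natrX ler_nat; apply: leq_trans hc _; apply: ltnW.
  by apply: ltn_expl; apply: leq_trans hb.
have bpos : 0 < (b%:R : R) by rewrite ltr0n; apply: leq_trans hb.
have [eb|hb4] := eqVneq b 3.
  subst b.
  have HA := fun k p q => @I2sub R 3 c k p q hb hB.
  have HG := fun m p q => @I1gap R 3 c m p q hb hB.
  have hy : (3%:R : R)^-1 = 1/3 by rewrite div1r.
  have [oL lL oU lU hs] := num3 hy HA HG.
  apply: (assemble hb hB _ oL lL oU lU hs).
  apply: mulr_ge0; first by apply: divr_ge0; exact: ler0n.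
  by apply: exprn_ge0; rewrite invr_ge0; exact: ler0n.
have HA := fun k p q => @I2sub R b c k p q hb hB.
have HG := fun m p q => @I1gap R b c m p q hb hB.
have b4 : (4 <= b)%N by rewrite ltn_neqAle eq_sym hb4 hb.
have y0 : 0 < (b%:R : R)^-1 by rewrite invr_gt0.
have y4 : (b%:R : R)^-1 <= 1/4.
  rewrite div1r lef_pV2 ?posrE // ?ltr0n //.
  by rewrite ler_nat.
have [oL lL oU lU hs] := num4 y0 y4 HA HG.
apply: (assemble hb hB _ oL lL oU lU hs).
apply: mulr_ge0; first by apply: divr_ge0; exact: ler0n.
by apply: exprn_ge0; exact: ltW.
Qed.
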